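(* Let $\varphi$ be an optimal (expected-revenue-maximizing) mixed signaling scheme and let $S$ be a signal of $\varphi$ that is not singleton-splittable, i.e. $\mathrm{rev}(S)>\sum_{j\in S}\varphi_{j,S}\,\mathrm{rev}(j)$. Then both $w_1(S)$ and $w_2(S)$ belong to the set $\{w_1(j): j\in S\}$.
   Context: Setting: $n\ge 2$ bidders, $m$ item types with probabilities $p_j$, nonnegative valuations $v_{i,j}$; $\psi_{i,j}=p_jv_{i,j}$. A mixed signaling scheme is a finite signal set $\mathcal{S}$ and $\varphi:[m]\times\mathcal{S}\to[0,1]$ with $\sum_S\varphi(j,S)=1$ for each $j$; $\varphi_{j,S}=\varphi(j,S)$; a signal is identified with its support $\{j:\varphi_{j,S}>0\}$, so $j\in S$ means $\varphi_{j,S}>0$. Its expected revenue is $\sum_S\mathrm{max2}_i\{\sum_j\psi_{i,j}\varphi_{j,S}\}$ ($\mathrm{max2}$ = second-largest entry with multiplicity). Ties are broken by a fixed priority order on bidders. $w_1(S)$ is the bidder maximizing $\sum_j\psi_{i,j}\varphi_{j,S}$ and $w_2(S)$ the maximizer among $i\ne w_1(S)$; $\mathrm{rev}(S)=\sum_j\varphi_{j,S}\psi_{w_2(S),j}$. For a single type $j$, $w_1(j)$ is the bidder maximizing $\psi_{i,j}$, $w_2(j)$ the maximizer among the others, and $\mathrm{rev}(j)=\psi_{w_2(j),j}=\mathrm{max2}_i\psi_{i,j}$. *)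

(* Defs.v *)
From HB Require Import structures.
From mathcomp Require Import all_boot all_order all_algebra all_fingroup.
Set Implicit Arguments. Unset Strict Implicit. Unset Printing Implicit Defensive.
Import Order.TTheory GRing.Theory Num.Theory.
Local Open Scope ring_scope.

Section Auction.
Variables (R : realFieldType) (n m : nat).

(* Fixed priority order on bidders: bidder i has priority rank [pr i];
   a smaller rank wins ties. *)
Variable pr : {perm 'I_n}.

Definition beats (f : 'I_n -> R) (i k : 'I_n) : bool :=
  (f k < f i) || ((f k == f i) && (val (pr i) < val (pr k))%N).

Definition top (f : 'I_n -> R) (A : pred 'I_n) : option 'I_n :=
  [pick i | (i \in A) && [forall k, (k \in A) ==> ((k == i) || beats f i k)]].

Definition win1 (f : 'I_n -> R) : option 'I_n := top f predT.
Definition win2 (f : 'I_n -> R) : option 'I_n :=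
  top f [pred i | Some i != win1 f].

Definition psi (p : 'I_m -> R) (v : 'I_n -> 'I_m -> R) (i : 'I_n) (j : 'I_m) : R :=
  p j * v i j.

Definition bid (p : 'I_m -> R) (v : 'I_n -> 'I_m -> R) (S : finType)
  (phi : 'I_m -> S -> R) (s : S) (i : 'I_n) : R :=
  \sum_(j < m) psi p v i j * phi j s.

Definition w1S p v (S : finType) (phi : 'I_m -> S -> R) (s : S) :=
  win1 (bid p v phi s).
Definition w2S p v (S : finType) (phi : 'I_m -> S -> R) (s : S) :=
  win2 (bid p v phi s).

Definition revS p v (S : finType) (phi : 'I_m -> S -> R) (s : S) : R :=
  if w2S p v phi s is Some i then \sum_(j < m) phi j s * psi p v i j else 0.

Definition w1j p v (j : 'I_m) := win1 (fun i => psi p v i j).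
Definition w2j p v (j : 'I_m) := win2 (fun i => psi p v i j).
Definition revj p v (j : 'I_m) : R :=
  if w2j p v j is Some i then psi p v i j else 0.

Definition is_scheme (S : finType) (phi : 'I_m -> S -> R) : Prop :=
  (forall j s, 0 <= phi j s <= 1) /\ (forall j, \sum_(s : S) phi j s = 1).

(* Expected revenue: sum over signals of the second-highest bid
   (= bid of w2(S), i.e. rev(S)). *)
Definition revenue p v (S : finType) (phi : 'I_m -> S -> R) : R :=
  \sum_(s : S) revS p v phi s.

Definition optimal_scheme p v (S : finType) (phi : 'I_m -> S -> R) : Prop :=
  is_scheme phi /\
  forall (T : finType) (phi' : 'I_m -> T -> R),
    is_scheme phi' -> revenue p v phi' <= revenue p v phi.

End Auction.

(* Main.v *)
Require Import Defs.
From HB Require Import structures.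
From mathcomp Require Import all_boot all_order all_algebra all_fingroup.
Import Order.TTheory GRing.Theory Num.Theory.
Local Open Scope ring_scope.

Lemma top_spec (R : realFieldType) n (pr : {perm 'I_n}) (f : 'I_n -> R) A i :
  top pr f A = Some i -> i \in A /\ forall k, k \in A -> f k <= f i.
Proof.
rewrite /top; case: pickP => // j /andP[jA /forallP H] [<-]; split => // k kA.
have := H k; rewrite kA /= => /orP[/eqP -> //|]; rewrite /beats.
by case/orP => [/ltW //|/andP[/eqP -> _]].
Qed.

Lemma top_some (R : realFieldType) n (pr : {perm 'I_n}) (f : 'I_n -> R) A x :
  x \in A -> exists i, top pr f A = Some i.
Proof.
move=> xA; rewrite /top; case: pickP => [i _|H]; first by exists i.
exfalso.
have [a Aa Ha] := @extremumP R 'I_n (fun x y => y <= x) x (fun i => i \in A) f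
  (fun x => lexx x) (fun x y z h1 h2 => le_trans h2 h1) (fun x y => le_total y x) xA.
have Pa : (a \in A) && (f a == f a) by rewrite Aa eqxx.
have [b /andP[Ab /eqP fb] Hb] := @arg_minnP _ a (fun i => (i \in A) && (f i == f a)) (fun i => val (pr i)) Pa.
have := H b; rewrite Ab /=; move/negP; apply; apply/forallP => k.
apply/implyP => kA; case: (eqVneq k b) => //= kb.
rewrite /beats fb; have := Ha k kA; rewrite /= le_eqVlt => /orP[/eqP fk|->//].
rewrite fk eqxx ltxx /=.
have := Hb k; rewrite kA fk eqxx /= => /(_ isT).
rewrite leq_eqVlt => /orP[|->//].
by move/eqP/val_inj/perm_inj => bk; rewrite bk eqxx in kb.
Qed.

Arguments top_spec {R n pr f A i}.
Arguments top_some {R n pr f A} x.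

Lemma psi_le_revj (R : realFieldType) n m (pr : {perm 'I_n}) p v (i : 'I_n) (j : 'I_m) :
  w1j pr p v j != Some i -> psi p v i j <= revj (R:=R) pr p v j.
Proof.
move=> hi; rewrite /revj /w2j /win2.
have [u hu] : exists u, top pr (fun k => psi p v k j) [pred k | Some k != win1 pr (fun k => psi p v k j)] = Some u.
  by apply: (top_some i); rewrite inE eq_sym.
rewrite hu; have [_ H] := top_spec hu; apply: H; by rewrite inE eq_sym.
Qed.

Lemma bid_le (R : realFieldType) n m (pr : {perm 'I_n}) p v (S : finType) (phi : 'I_m -> S -> R) s i :
  (forall j, 0 <= phi j s) -> (forall j, 0 < phi j s -> w1j pr p v j != Some i) ->
  bid p v phi s i <= \sum_(j < m | 0 < phi j s) phi j s * revj pr p v j.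
Proof.
move=> h0 h; rewrite /bid [X in _ <= X]big_mkcond /=; apply: ler_sum => j _.
case: ifP => hp.
  by rewrite mulrC ler_wpM2l // psi_le_revj // h.
have : phi j s == 0 by rewrite eq_le h0 andbT leNgt hp.
by move/eqP ->; rewrite mulr0.
Qed.

Theorem claim2 (R : realFieldType) (n m : nat) (pr : {perm 'I_n})
  (p : 'I_m -> R) (v : 'I_n -> 'I_m -> R)
  (Hn : (2 <= n)%N)
  (Hp0 : forall j, 0 <= p j) (Hp1 : \sum_(j < m) p j = 1)
  (Hv : forall i j, 0 <= v i j)
  (S : finType) (phi : 'I_m -> S -> R)
  (Hopt : optimal_scheme pr p v phi)
  (s : S)
  (Hns : \sum_(j < m | 0 < phi j s) phi j s * revj pr p v j < revS pr p v phi s) :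
  (exists2 j : 'I_m, 0 < phi j s & w1S pr p v phi s = w1j pr p v j) /\
  (exists2 j : 'I_m, 0 < phi j s & w2S pr p v phi s = w1j pr p v j).
Proof.
have h0 : forall j, 0 <= phi j s.
  by move=> j; have [[H _] _] := Hopt; by case/andP: (H j s).
have n0 : (0 < n)%N by apply: leq_trans Hn.
pose i0 : 'I_n := Ordinal n0. pose i1 : 'I_n := Ordinal Hn.
pose b := bid p v phi s.
have [a ha] : exists a, w1S pr p v phi s = Some a.
  by apply: (top_some i0).
have [c hc] : exists c, w2S pr p v phi s = Some c.
  rewrite /w2S /win2; rewrite /w1S in ha; rewrite ha.
  case: (eqVneq a i0) => e.
    apply: (top_some i1); by rewrite inE e.
  by apply: (top_some i0); by rewrite inE (inj_eq (@Some_inj _)) eq_sym.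
have [_ Ha] := top_spec ha.
have hrev : revS pr p v phi s = b c.
  rewrite /revS hc /b /bid; apply: eq_bigr => j _; exact: mulrC.
have key : forall i, b c <= b i ->
    exists2 j : 'I_m, 0 < phi j s & Some i = w1j pr p v j.
  move=> i hi; case: (boolP [exists j, (0 < phi j s) && (w1j pr p v j == Some i)]).
    by case/existsP => j /andP[hj /eqP e]; exists j.
  rewrite negb_exists => /forallP hn; exfalso.
  have : b i <= \sum_(j < m | 0 < phi j s) phi j s * revj pr p v j.
    apply: bid_le => // j hj; have := hn j; by rewrite hj.
  move=> hb; have := lt_le_trans Hns (le_trans (eq_ind_r (fun x => x <= b i) hi hrev) hb).
  by rewrite ltxx.
split; [rewrite ha | rewrite hc]; apply: key => //.
exact: Ha.
Qed.
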